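(* Let $\alpha\in(0,1)$, $T_+=\sqrt{1-\alpha}$, $\tau>0$, and let $N\ge 2$ and $1\le m_c<N$ be integers. Consider the $N$-dimensional Galerkin–Koornwinder (GK) system $$\frac{d\boldsymbol{y}}{dt}=A(\tau)\boldsymbol{y}+G_2(\boldsymbol{y})+G_3(\boldsymbol{y}),\qquad \boldsymbol{y}=(y_0,\dots,y_{N-1})^T\in\mathbb{R}^N,$$ with $A(\tau)$, $G_2$, $G_3$ as described in the context. Assume that $A(\tau)$ is diagonalizable over $\mathbb{C}$, and let $\boldsymbol{y}(t)$ be a solution of this system on an interval $[0,t_m]$. Let $\varphi_\tau\colon H_{\mathfrak{c}}\to H_{\mathfrak{s}}$ be a parameterization of $\boldsymbol{y}_{\mathfrak{s}}$ in terms of $\boldsymbol{y}_{\mathfrak{c}}$. Assume that for some $R>0$, $$\|\boldsymbol{y}(t)\|\le R,\qquad \|\boldsymbol{y}_{\mathfrak{c}}(t)+\varphi_\tau(\boldsymbol{y}_{\mathfrak{c}}(t))\|\le R,\qquad t\in[0,t_m].$$ Then there exists a constant $C(R)>0$ such that $$\overline{\Big\|\dot{\boldsymbol{z}}_{\mathfrak{c}}-\Lambda_{\mathfrak{c}}\boldsymbol{z}_{\mathfrak{c}}-Q_{\mathfrak{c}}^*\Big(G_2\big(P_{\mathfrak{c}}\boldsymbol{z}_{\mathfrak{c}}+\varphi_\tau(P_{\mathfrak{c}}\boldsymbol{z}_{\mathfrak{c}})\big)+G_3\big(P_{\mathfrak{c}}\boldsymbol{z}_{\mathfrak{c}}+\varphi_\tau(P_{\mathfrak{c}}\boldsymbol{z}_{\mathfrak{c}})\big)\Big)\Big\|^2}\;\le\;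 C(R)\,\overline{\big\|P_{\mathfrak{s}}\boldsymbol{z}_{\mathfrak{s}}-\varphi_\tau(P_{\mathfrak{c}}\boldsymbol{z}_{\mathfrak{c}})\big\|^2},$$ where $\overline{f}=\frac{1}{t_m}\int_0^{t_m}f(t)\,dt$ denotes the time average over $(0,t_m)$ and $\Lambda_{\mathfrak{c}}=\mathrm{diag}(\lambda_1,\dots,\lambda_{m_c})$.
   Context: Notation for the GK system. For $j\ge 0$ let $\kappa_j=\frac{(j^2+1)((j+1)^2+1)}{2j+1}$ (the squared norm of the $j$-th augmented Koornwinder polynomial) and $K_j(-1)=(j^2+j+1)(-1)^j$. For each $n\ge1$, the coefficients $\boldsymbol{a}_n=(a_{n,0},\dots,a_{n,n-1})^T$ are the solution of the upper triangular system $\mathbf{T}\boldsymbol{a}_n=\boldsymbol{b}_n$, where $\mathbf{T}=(\mathbf{T}_{i,j})_{0\le i,j\le n-1}$ has $\mathbf{T}_{i,j}=0$ if $j<i$, $\mathbf{T}_{i,i}=i^2+1$, $\mathbf{T}_{i,j}=-(2i+1)$ if $j>i$, and $b_{n,i}=-\tfrac12(2i+1)(n+i+1)(n-i)$ if $n+i$ is even, $b_{n,i}=(n^2+n)(2i+1)-\tfrac{i}{2}(n+i)(n-i+1)-\tfrac12(i+1)(n-i-1)(n+i+2)$ if $n+i$ is odd. The matrix $A(\tau)$ is the $N\times N$ real matrix with entries, for $0\le j,n\le N-1$, $$(A(\tau))_{j,n}=\frac{1}{\kappa_j}\Big(1-3T_+^2-\alpha K_n(-1)+\frac{2}{\tau}\sum_{k=0}^{n-1}a_{n,k}\big(\delta_{j,k}\kappa_j-1\big)\Big).$$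 The nonlinear terms are $G_2(\boldsymbol{y})=-3T_+\big(\sum_{n=0}^{N-1}y_n\big)^2\boldsymbol{\nu}_N$ and $G_3(\boldsymbol{y})=-\big(\sum_{n=0}^{N-1}y_n\big)^3\boldsymbol{\nu}_N$, with $\boldsymbol{\nu}_N=(1/\kappa_0,\dots,1/\kappa_{N-1})^T$; they are extended to $\mathbb{C}^N$ by the same formulas. (This system is the GK approximation of the delay equation $\dot{\hat T}=(1-3T_+^2)\hat T(t)-\alpha\hat T(t-\tau)-3T_+\hat T^2(t)-\hat T^3(t)$.) Spectral notation. The eigenvalues $\lambda_1,\dots,\lambda_N$ of $A(\tau)$ (repeated with multiplicity) are ordered by decreasing real part, and among equal real parts by decreasing imaginary part; $\boldsymbol{e}_1,\dots,\boldsymbol{e}_N$ are corresponding eigenvectors. $P=[\boldsymbol{e}_1,\dots,\boldsymbol{e}_N]$, $P_{\mathfrak{c}}=[\boldsymbol{e}_1,\dots,\boldsymbol{e}_{m_c}]$, $P_{\mathfrak{s}}=[\boldsymbol{e}_{m_c+1},\dots,\boldsymbol{e}_N]$; $Q$ is the $N\times N$ matrix whose columns are eigenvectors of the conjugate transpose $A(\tau)^*$, normalized so that $Q^*P=I_{N\times N}$, and $Q_{\mathfrak{c}}$ is the matrix of the first $m_c$ columns of $Q$. $H_{\mathfrak{c}}=\mathrm{span}\{\boldsymbol{e}_1,\dots,\boldsymbol{e}_{m_c}\}$, $H_{\mathfrak{s}}=\mathrm{span}\{\boldsymbol{e}_{m_c+1},\dots,\boldsymbol{e}_N\}$. For a solution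 $\boldsymbol{y}(t)$, $\boldsymbol{z}=(z_1,\dots,z_N)^T$ is defined by $\boldsymbol{y}=P\boldsymbol{z}$, $\boldsymbol{z}_{\mathfrak{c}}=(z_1,\dots,z_{m_c})^T$, $\boldsymbol{z}_{\mathfrak{s}}=(z_{m_c+1},\dots,z_N)^T$, $\boldsymbol{y}_{\mathfrak{c}}=P_{\mathfrak{c}}\boldsymbol{z}_{\mathfrak{c}}$ (low-mode projection) and $\boldsymbol{y}_{\mathfrak{s}}=P_{\mathfrak{s}}\boldsymbol{z}_{\mathfrak{s}}$ (high-mode projection). $\|\cdot\|$ is the Euclidean (Hermitian) norm. *)

(* Defs.v *)
From mathcomp Require Import all_boot all_order all_algebra.
From mathcomp Require Import all_classical all_reals all_analysis.
From mathcomp Require Import complex.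
Set Implicit Arguments. Unset Strict Implicit. Unset Printing Implicit Defensive.
Import numFieldNormedType.Exports.
Import Order.TTheory GRing.Theory Num.Theory.
Local Open Scope ring_scope.

Definition kappa (R : realType) (j : nat) : R :=
  ((j ^ 2 + 1)%:R * ((j.+1) ^ 2 + 1)%:R) / (2 * j + 1)%:R.

Definition Km1 (R : realType) (j : nat) : R := (j ^ 2 + j + 1)%:R * (-1) ^+ j.

Definition Tmat (R : realType) (n : nat) : 'M[R]_n :=
  \matrix_(i < n, j < n)
    if (j < i)%N then 0
    else if i == j then (i ^ 2 + 1)%:R else - (2 * i + 1)%:R.

Definition bvec (R : realType) (n : nat) : 'cV[R]_n :=
  \col_(i < n)
    if ~~ odd (n + i) then
      - (1 / 2) * (2 * i + 1)%:R * (n + i + 1)%:R * (n - i)%:R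
    else
      (n ^ 2 + n)%:R * (2 * i + 1)%:R
      - (i%:R / 2) * (n + i)%:R * (n - i + 1)%:R
      - (1 / 2) * (i + 1)%:R * (n - i - 1)%:R * (n + i + 2)%:R.

(* a_n, the (unique) solution of T a_n = b_n (T is triangular with nonzero diagonal) *)
Definition avec (R : realType) (n : nat) : 'cV[R]_n := invmx (Tmat R n) *m bvec R n.

Definition Tp (R : realType) (alpha : R) : R := Num.sqrt (1 - alpha).

Definition Amat (R : realType) (alpha tau : R) (N : nat) : 'M[R]_N :=
  \matrix_(j < N, n < N)
    ((kappa R j)^-1 *
     (1 - 3 * Tp alpha ^+ 2 - alpha * Km1 R n
      + 2 / tau * \sum_(k < n) avec R n k 0 * ((j == k :> nat)%:R * kappa R j - 1))).

Definition nuvec (R : realType) (N : nat) : 'cV[R]_N := \col_(j < N) (kappa R j)^-1.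

Definition G2 (R : realType) (alpha : R) (N : nat) (y : 'cV[R]_N) : 'cV[R]_N :=
  (- 3 * Tp alpha * (\sum_(n < N) y n 0) ^+ 2) *: nuvec R N.
Definition G3 (R : realType) (N : nat) (y : 'cV[R]_N) : 'cV[R]_N :=
  (- (\sum_(n < N) y n 0) ^+ 3) *: nuvec R N.

Definition toC (R : realType) (x : R) : R[i] := (x%:C)%C.
Definition MtoC (R : realType) (m n : nat) (M : 'M[R]_(m, n)) : 'M[R[i]]_(m, n) :=
  map_mx (@toC R) M.

Definition G2c (R : realType) (alpha : R) (N : nat) (y : 'cV[R[i]]_N) : 'cV[R[i]]_N :=
  (- 3 * toC (Tp alpha) * (\sum_(n < N) y n 0) ^+ 2) *: MtoC (nuvec R N).
Definition G3c (R : realType) (N : nat) (y : 'cV[R[i]]_N) : 'cV[R[i]]_N :=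
  (- (\sum_(n < N) y n 0) ^+ 3) *: MtoC (nuvec R N).

Definition adjoint (R : realType) (m n : nat) (M : 'M[R[i]]_(m, n)) : 'M[R[i]]_(n, m) :=
  (map_mx (@conjc R) M)^T.

Definition rnorm2 (R : realType) (n : nat) (v : 'cV[R]_n) : R :=
  \sum_(i < n) v i 0 ^+ 2.
Definition rnorm (R : realType) (n : nat) (v : 'cV[R]_n) : R := Num.sqrt (rnorm2 v).
Definition cnorm2 (R : realType) (n : nat) (v : 'cV[R[i]]_n) : R :=
  \sum_(i < n) (complex.Re (v i 0) ^+ 2 + complex.Im (v i 0) ^+ 2).
Definition cnorm (R : realType) (n : nat) (v : 'cV[R[i]]_n) : R := Num.sqrt (cnorm2 v).

Definition eig_ordered (R : realType) (N : nat) (lam : 'rV[R[i]]_N) : Prop :=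
  forall i j : 'I_N, (i < j)%N ->
    complex.Re (lam 0 j) < complex.Re (lam 0 i) \/
    (complex.Re (lam 0 j) = complex.Re (lam 0 i) /\
     complex.Im (lam 0 j) <= complex.Im (lam 0 i)).

Definition zvec (R : realType) (mc ns : nat) (P : 'M[R[i]]_(mc + ns))
  (y : 'cV[R]_(mc + ns)) : 'cV[R[i]]_(mc + ns) := invmx P *m MtoC y.
Definition zc (R : realType) (mc ns : nat) (P : 'M[R[i]]_(mc + ns))
  (y : 'cV[R]_(mc + ns)) : 'cV[R[i]]_mc := usubmx (zvec P y).
Definition zs (R : realType) (mc ns : nat) (P : 'M[R[i]]_(mc + ns))
  (y : 'cV[R]_(mc + ns)) : 'cV[R[i]]_ns := dsubmx (zvec P y).
Definition ycproj (R : realType) (mc ns : nat) (P : 'M[R[i]]_(mc + ns))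
  (y : 'cV[R]_(mc + ns)) : 'cV[R[i]]_(mc + ns) := lsubmx P *m zc P y.
Definition ysproj (R : realType) (mc ns : nat) (P : 'M[R[i]]_(mc + ns))
  (y : 'cV[R]_(mc + ns)) : 'cV[R[i]]_(mc + ns) := rsubmx P *m zs P y.

(* Main.v *)
Require Import Defs.
From mathcomp Require Import all_boot all_order all_algebra.
From mathcomp Require Import all_classical all_reals all_analysis.
From mathcomp Require Import complex.
From mathcomp Require Import ring lra.
Set Implicit Arguments. Unset Strict Implicit. Unset Printing Implicit Defensive.
Import numFieldNormedType.Exports.
Import Order.TTheory GRing.Theory Num.Theory.
Local Open Scope ring_scope.

Module Helpers.
Import HBNNSimple.

Lemma int_le_scale d (T : measurableType d) (R : realType)
  (mu : {measure set T -> \bar R}) (D : set T) (f g : T -> \bar R) (c : R) :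
  0 < c -> (forall x, D x -> (0 <= f x)%E) -> (forall x, D x -> (0 <= g x)%E) ->
  (forall x, D x -> (f x <= c%:E * g x)%E) ->
  (\int[mu]_(x in D) f x <= c%:E * \int[mu]_(x in D) g x)%E.
Proof.
move=> c0 f0 g0 fg; rewrite !ge0_integralE//.
apply: ge_ereal_sup => _ [h /= hf <-].
have ci0 : 0 <= c^-1 by rewrite invr_ge0 ltW.
pose h' := scale_nnsfun h ci0.
have -> : sintegral mu h = sintegral mu (cst c \* h')%R.
  by apply: eq_sintegral => x /=; rewrite mulrA mulfV ?gt_eqF// mul1r.
rewrite sintegralrM; apply: lee_wpmul2l; first by rewrite lee_fin ltW.
apply: ereal_sup_ubound => /=; exists h' => // x.
have := hf x; rewrite /patch /=; case: ifPn => xD hx.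
  have := fg x; rewrite -inE => /(_ xD) fgx.
  rewrite /= -(@lee_pmul2l _ c%:E) ?lte_fin// -EFinM mulrA mulfV ?gt_eqF// mul1r.
  exact: le_trans hx fgx.
have h0 : h x = 0 by apply/eqP; rewrite eq_le -lee_fin hx /=.
by rewrite h0 mulr0.
Qed.

End Helpers.
Import Helpers.

Section Alg.
Variable R : realType.
Definition n2 (x : R[i]) : R := complex.Re x ^+ 2 + complex.Im x ^+ 2.

Lemma n2_ge0 x : 0 <= n2 x.
Proof. by rewrite /n2 addr_ge0 // sqr_ge0. Qed.

Lemma n2M x y : n2 (x * y) = n2 x * n2 y.
Proof. case: x => a b; case: y => c d; rewrite /n2 /=. ring. Qed.

Lemma ReD (x y : R[i]) : complex.Re (x + y) = complex.Re x + complex.Re y.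
Proof. by case: x => a b; case: y => c d. Qed.
Lemma ImD (x y : R[i]) : complex.Im (x + y) = complex.Im x + complex.Im y.
Proof. by case: x => a b; case: y => c d. Qed.

Lemma n2N x : n2 (- x) = n2 x.
Proof. case: x => a b; rewrite /n2 /=. ring. Qed.

Lemma n2D x y : n2 (x + y) <= 2 * n2 x + 2 * n2 y.
Proof. case: x => a b; case: y => c d; rewrite /n2 /=. have := sqr_ge0 (a - c); have := sqr_ge0 (b - d); nra. Qed.

Lemma n2B x y : n2 (x - y) <= 2 * n2 x + 2 * n2 y.
Proof. by rewrite -(n2N y) n2D. Qed.

Lemma Re_sum n (f : 'I_n -> R[i]) : complex.Re (\sum_(i < n) f i) = \sum_(i < n) complex.Re (f i).
Proof.
elim: n f => [|n IH] f; first by rewrite !big_ord0.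
by rewrite !big_ord_recr /= ReD IH.
Qed.
Lemma Im_sum n (f : 'I_n -> R[i]) : complex.Im (\sum_(i < n) f i) = \sum_(i < n) complex.Im (f i).
Proof.
elim: n f => [|n IH] f; first by rewrite !big_ord0.
by rewrite !big_ord_recr /= ImD IH.
Qed.

Lemma CS n (x : 'I_n -> R) : (\sum_(i < n) x i) ^+ 2 <= n%:R * \sum_(i < n) x i ^+ 2.
Proof.
have H : 0 <= \sum_(i < n) \sum_(j < n) (x i - x j) ^+ 2.
  by apply: sumr_ge0 => i _; apply: sumr_ge0 => j _; exact: sqr_ge0.
have E : \sum_(i < n) \sum_(j < n) (x i - x j) ^+ 2 =
   2 * (n%:R * \sum_(i < n) x i ^+ 2 - (\sum_(i < n) x i) ^+ 2).
  have e1 : forall i : 'I_n, \sum_(j < n) (x i - x j) ^+ 2 =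
     x i ^+ 2 *+ n + \sum_(j < n) x j ^+ 2 - 2 * (x i * \sum_(j < n) x j).
    move=> i; rewrite mulr_sumr mulr_sumr.
    have -> : x i ^+ 2 *+ n = \sum_(j < n) x i ^+ 2 by rewrite sumr_const card_ord.
    rewrite -big_split -sumrB /=. apply: eq_bigr => j _; ring.
  rewrite (eq_bigr _ (fun i _ => e1 i)) sumrB big_split /= sumr_const card_ord.
  rewrite -mulr_sumr -mulr_suml sumrMnl.
  set S := \sum_(i < n) x i ^+ 2; set T := \sum_(i < n) x i.
  rewrite -mulr_natr expr2; ring.
rewrite E in H; move: H.
set S := \sum_(i < n) x i ^+ 2; set T := \sum_(i < n) x i.
move=> H; nra.
Qed.

Lemma n2_sum n (f : 'I_n -> R[i]) : n2 (\sum_(i < n) f i) <= n%:R * \sum_(i < n) n2 (f i).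
Proof.
rewrite /n2 Re_sum Im_sum big_split /= mulrDr.
by apply: lerD; apply: CS.
Qed.
End Alg.

Section Mx.
Variable R : realType.
Local Notation n2 := (@n2 R).

Lemma MtoC_mul m n p (A : 'M[R]_(m,n)) (B : 'M[R]_(n,p)) : MtoC (A *m B) = MtoC A *m MtoC B.
Proof.
apply/matrixP => i j; rewrite !mxE /toC rmorph_sum; apply: eq_bigr => k _.
by rewrite !mxE rmorphM.
Qed.

Lemma MtoC_add m n (A B : 'M[R]_(m,n)) : MtoC (A + B) = MtoC A + MtoC B.
Proof. by apply/matrixP => i j; rewrite !mxE /toC rmorphD. Qed.

Lemma MtoC_sum N (y : 'cV[R]_N) : \sum_(n < N) MtoC y n 0 = toC (\sum_(n < N) y n 0).
Proof. by rewrite /toC rmorph_sum; apply: eq_bigr => k _; rewrite mxE. Qed.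

Lemma MtoC_G2 alpha N (y : 'cV[R]_N) : MtoC (G2 alpha y) = G2c alpha (MtoC y).
Proof.
apply/matrixP => i j; rewrite /G2 /G2c MtoC_sum !mxE /toC.
rewrite !rmorphM rmorphN rmorph_nat; ring.
Qed.

Lemma MtoC_G3 N (y : 'cV[R]_N) : MtoC (G3 y) = G3c (MtoC y).
Proof.
apply/matrixP => i j; rewrite /G3 /G3c MtoC_sum !mxE /toC.
rewrite !rmorphM rmorphN !rmorphM; ring.
Qed.

Definition sumv N (v : 'cV[R[i]]_N) := \sum_(n < N) v n 0.

Lemma Gc_eq alpha N (v : 'cV[R[i]]_N) :
  G2c alpha v + G3c v =
  ((-3 * toC (Tp alpha)) * sumv v ^+ 2 + - sumv v ^+ 3) *: MtoC (nuvec R N).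
Proof. by rewrite /G2c /G3c scalerDl. Qed.

Lemma cnorm2_scale N k (u : 'cV[R[i]]_N) : cnorm2 (k *: u) = n2 k * cnorm2 u.
Proof.
rewrite /cnorm2 mulr_sumr; apply: eq_bigr => i _; rewrite mxE.
exact: (n2M k (u i 0)).
Qed.

Lemma sumvB N (a b : 'cV[R[i]]_N) : sumv (a - b) = sumv a - sumv b.
Proof. by rewrite /sumv -sumrB; apply: eq_bigr => i _; rewrite !mxE. Qed.

Lemma n2_sumv N (v : 'cV[R[i]]_N) : n2 (sumv v) <= N%:R * cnorm2 v.
Proof. exact: n2_sum. Qed.

Lemma cnorm2_MtoC N (y : 'cV[R]_N) : cnorm2 (MtoC y) = rnorm2 y.
Proof. by apply: eq_bigr => i _; rewrite mxE /toC /= expr0n /= addr0. Qed.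

Lemma cnorm2_ge0 N (v : 'cV[R[i]]_N) : 0 <= cnorm2 v.
Proof. by apply: sumr_ge0 => i _; rewrite addr_ge0 // sqr_ge0. Qed.

Lemma hbound (k a b : R[i]) B : 0 <= B -> n2 a <= B -> n2 b <= B ->
  n2 (k * (a + b) - (a ^+ 2 + a * b + b ^+ 2)) <= 8 * n2 k * B + 20 * B ^+ 2.
Proof.
move=> B0 ha hb.
have h1 := n2B (k * (a + b)) (a ^+ 2 + a * b + b ^+ 2).
have h2 := n2M k (a + b).
have h3 := n2D a b.
have h4 := n2D (a ^+ 2 + a * b) (b ^+ 2).
have h5 := n2D (a ^+ 2) (a * b).
have h6 : n2 (a ^+ 2) <= B * B by rewrite expr2 n2M ler_pM // n2_ge0.
have h7 : n2 (a * b) <= B * B by rewrite n2M ler_pM // n2_ge0.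
have h8 : n2 (b ^+ 2) <= B * B by rewrite expr2 n2M ler_pM // n2_ge0.
have h9 : n2 k * n2 (a + b) <= n2 k * (4 * B).
  by apply: ler_wpM2l; [exact: n2_ge0 | lra].
rewrite expr2; lra.
Qed.
End Mx.

Section Mx2.
Variable R : realType.

Lemma adj_lsub m n (Q : 'M[R[i]]_(m + n)) : adjoint (lsubmx Q) = usubmx (adjoint Q).
Proof. by apply/matrixP => i j; rewrite !mxE. Qed.

Lemma usub_diag m n (lam : 'rV[R[i]]_(m + n)) (v : 'cV[R[i]]_(m + n)) :
  usubmx (diag_mx lam *m v) = diag_mx (lsubmx lam) *m usubmx v.
Proof. by apply/matrixP => i j; rewrite !mul_diag_mx !mxE. Qed.

Lemma usub_mul m n p (M : 'M[R[i]]_(m + n, p)) (v : 'cV[R[i]]_p) :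
  usubmx (M *m v) = usubmx M *m v.
Proof. by rewrite -{1}(vsubmxK M) mul_col_mx col_mxKu. Qed.

Lemma usubD m n p (A B : 'M[R[i]]_(m + n, p)) : usubmx (A + B) = usubmx A + usubmx B.
Proof. by rewrite -{1}(vsubmxK A) -{1}(vsubmxK B) add_col_mx col_mxKu. Qed.

Lemma yc_ys m n (P : 'M[R[i]]_(m + n)) y : P \in unitmx ->
  ycproj P y + ysproj P y = MtoC y.
Proof.
move=> Pu; rewrite /ycproj /ysproj /zc /zs -mul_row_col hsubmxK vsubmxK /zvec.
by rewrite mulmxA mulmxV // mul1mx.
Qed.
End Mx2.

Theorem proposition1 (R : realType) (alpha tau : R) (mc ns : nat)
    (lam : 'rV[R[i]]_(mc + ns)) (P Q : 'M[R[i]]_(mc + ns)) :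
  0 < alpha < 1 -> 0 < tau -> (1 <= mc)%N -> (1 <= ns)%N ->
  P \in unitmx ->
  MtoC (Amat alpha tau (mc + ns)) *m P = P *m diag_mx lam ->
  eig_ordered lam ->
  adjoint (MtoC (Amat alpha tau (mc + ns))) *m Q = Q *m diag_mx (map_mx (@conjc R) lam) ->
  adjoint Q *m P = 1%:M ->
  forall Rb : R, 0 < Rb ->
  exists C : R, 0 < C /\
  forall (tm : R) (y : R -> 'cV[R]_(mc + ns))
         (phi : 'cV[R[i]]_(mc + ns) -> 'cV[R[i]]_(mc + ns)),
    0 < tm ->
    {within `[0, tm]%classic, continuous y}%classic ->
    (forall t, 0 < t < tm ->
       derivable y t 1 /\
       'D_1 y t = Amat alpha tau (mc + ns) *m y t + G2 alpha (y t) + G3 (y t)) ->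
    (forall v, (exists w, v = lsubmx P *m w) -> exists w, phi v = rsubmx P *m w) ->
    (forall t, 0 <= t <= tm ->
       rnorm (y t) <= Rb /\ cnorm (ycproj P (y t) + phi (ycproj P (y t))) <= Rb) ->
    let zcdot t := usubmx (invmx P *m MtoC ('D_1 y t)) in
    let wc t := ycproj P (y t) + phi (ycproj P (y t)) in
    ((tm^-1)%:E *
       \int[@lebesgue_measure R]_(t in `]0%R, tm[%classic)
         (cnorm2 (zcdot t - diag_mx (lsubmx lam) *m zc P (y t)
                  - adjoint (lsubmx Q) *m (G2c alpha (wc t) + G3c (wc t))))%:E
     <= C%:E * ((tm^-1)%:E *
       \int[@lebesgue_measure R]_(t in `]0%R, tm[%classic)
         (cnorm2 (ysproj P (y t) - phi (ycproj P (y t))))%:E))%E.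
Proof.
move=> _ _ _ _ Pu AP _ _ QP Rb Rb0.
set N := (mc + ns)%N.
set Ac := MtoC (Amat alpha tau N).
set U := usubmx (invmx P).
set u := U *m MtoC (nuvec R N).
set B := N%:R * Rb ^+ 2.
set k := -3 * toC (Tp alpha).
set H := 8 * n2 k * B + 20 * B ^+ 2.
have B0 : 0 <= B by rewrite mulr_ge0 // sqr_ge0.
have H0 : 0 <= H by have nk := n2_ge0 k; rewrite /H; nra.
have QPi : adjoint Q = invmx P.
  by rewrite -[adjoint Q]mulmx1 -(mulmxV Pu) mulmxA QP mul1mx.
have PA : invmx P *m Ac = diag_mx lam *m invmx P.
  rewrite -[invmx P *m Ac]mulmx1 -(mulmxV Pu) !mulmxA -(mulmxA _ Ac) AP.
  by rewrite mulmxA mulVmx // mul1mx.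
exists (N%:R * H * cnorm2 u + 1); split.
  by rewrite ltr_pwDr // mulr_ge0 // ?mulr_ge0 // cnorm2_ge0.
move=> tm y phi tm0 _ Hd _ Hn; cbv zeta.
pose wc t := ycproj P (y t) + phi (ycproj P (y t)).
pose zcdot t := usubmx (invmx P *m MtoC ('D_1 y t)).
rewrite muleCA; apply: lee_wpmul2l; first by rewrite lee_fin invr_ge0 ltW.
apply: int_le_scale.
- by rewrite ltr_pwDr // mulr_ge0 // ?mulr_ge0 // cnorm2_ge0.
- by move=> t _; rewrite lee_fin cnorm2_ge0.
- by move=> t _; rewrite lee_fin cnorm2_ge0.
move=> t; rewrite /= in_itv /= => /andP[t0 t1].
have [_ Hdt] := Hd t (ltac:(by rewrite t0 t1)).
have [Hy Hw] := Hn t (ltac:(by rewrite (ltW t0) (ltW t1))).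
rewrite -EFinM lee_fin -/(wc t) -/(zcdot t).
set Y := MtoC (y t).
set E := ysproj P (y t) - phi (ycproj P (y t)).
have YW : Y - wc t = E.
  rewrite /wc /E /Y -(yc_ys (y t) Pu); set a := ycproj P (y t).
  by rewrite opprD addrACA subrr add0r.
set sY := sumv Y; set sW := sumv (wc t).
have vec : zcdot t - diag_mx (lsubmx lam) *m zc P (y t)
           - adjoint (lsubmx Q) *m (G2c alpha (wc t) + G3c (wc t))
         = ((sY - sW) * (k * (sY + sW) - (sY ^+ 2 + sY * sW + sW ^+ 2))) *: u.
  rewrite /zcdot Hdt !MtoC_add MtoC_mul MtoC_G2 MtoC_G3 -/Y -/Ac.
  rewrite -(addrA (Ac *m Y)) mulmxDr mulmxA PA usubD -mulmxA usub_diag.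
  rewrite adj_lsub QPi /zc /zvec -/Y !usub_mul -/U !Gc_eq -/k -/sY -/sW /u -scalemxAr.
  rewrite (addrC (diag_mx (lsubmx lam) *m _)) addrK -scalemxAr.
  have sc : forall (a b : R[i]) (v : 'cV[R[i]]_mc), a *: v - b *: v = (a - b) *: v.
    by move=> a b v; rewrite scalerBl.
  rewrite sc; congr (_ *: _); ring.
rewrite vec cnorm2_scale n2M.
have hE : n2 (sY - sW) <= N%:R * cnorm2 E by rewrite -sumvB YW n2_sumv.
have hY : n2 sY <= B.
  apply: le_trans (n2_sumv Y) _; rewrite cnorm2_MtoC /B ler_wpM2l //.
  move: Hy; rewrite /rnorm => Hy.
  have r0 : 0 <= rnorm2 (y t) by apply: sumr_ge0 => i _; exact: sqr_ge0.
  have := sqr_sqrtr r0; have := sqrtr_ge0 (rnorm2 (y t)); nra.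
have hW : n2 sW <= B.
  apply: le_trans (n2_sumv (wc t)) _; rewrite /B ler_wpM2l //.
  move: Hw; rewrite /cnorm -/(wc t) => Hw.
  have r0 := cnorm2_ge0 (wc t).
  have := sqr_sqrtr r0; have := sqrtr_ge0 (cnorm2 (wc t)); nra.
have hh := hbound k B0 hY hW.
have e0 := cnorm2_ge0 E; have u0 := cnorm2_ge0 u.
have n0 := n2_ge0 (sY - sW).
have n1 := n2_ge0 (k * (sY + sW) - (sY ^+ 2 + sY * sW + sW ^+ 2)).
set a := n2 (sY - sW) in hE n0 *.
set b := n2 (k * (sY + sW) - (sY ^+ 2 + sY * sW + sW ^+ 2)) in hh n1 *.
rewrite -/H in hh.
have N0 : 0 <= N%:R :> R by [].
set c := cnorm2 E in hE e0 *; set d := cnorm2 u in u0 *.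
have h1 : a * b <= N%:R * c * H.
  by apply: ler_pM => //.
have h2 : a * b * d <= N%:R * c * H * d by apply: ler_wpM2r.
nra.
Qed.
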